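(* Let $a,b$ be non-zero constants with $a\neq b$, and let $w=w(x,y,z)$ be a function on an open set $B\subset\mathbb{R}^3$ with continuous second derivatives and $w_x\neq 0$. On $B\times\mathbb{R}^2$ with coordinates $(x,y,z,p_0,p_1)$ consider the bivectors $P_0,P_1$ with components (so that $\{f,g\}_i=\sum_{\alpha,\beta}P_i^{\alpha\beta}\partial_\alpha f\,\partial_\beta g$) \[ P_0= \begin{pmatrix} 0&0&0&-w_z/w_x&-w_y/w_x\\ 0&0&0&0&1\\ 0&0&0&1&0\\ w_z/w_x&0&-1&0&0\\ w_y/w_x&-1&0&0&0 \end{pmatrix}, \qquad P_1= \begin{pmatrix} 0&0&0&0&0\\ 0&0&0&0&b\\ 0&0&0&a&0\\ 0&0&-a&0&0\\ 0&-b&0&0&0 \end{pmatrix}. \] Then $P_0$ and $P_1$ define a compatible Poisson pencil (i.e. $P_0+\lambda P_1$ satisfies the Jacobi identity for all $\lambda$) if and only if $w$ satisfies the dispersionless Hirota equation \[ (b-a)\,w_x w_{yz}+a\, w_y w_{zx}-b\, w_z w_{xy}=0. \]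
   Context: A bivector $P$ defines a bracket $\{f,g\}=\sum_{\alpha,\beta}P^{\alpha\beta}\partial_\alpha f\partial_\beta g$; it is Poisson if this bracket satisfies the Jacobi identity. A compatible Poisson pencil is a pair of Poisson bivectors whose every linear combination $P_0+\lambda P_1$ is Poisson. *)

(* Defs.v *)
From HB Require Import structures.
From mathcomp Require Import all_boot all_order all_algebra.
From mathcomp Require Import all_classical all_reals all_analysis.
Set Implicit Arguments. Unset Strict Implicit. Unset Printing Implicit Defensive.
Import Order.TTheory GRing.Theory Num.Theory.
Import numFieldNormedType.Exports.
Local Open Scope classical_set_scope.
Local Open Scope ring_scope.

Definition ebasis (R : realType) (n : nat) (i : 'I_n) : 'rV[R]_n := delta_mx 0 i.

Definition partial (R : realType) (n : nat) (f : 'rV[R]_n -> R) (i : 'I_n)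
  (x : 'rV[R]_n) : R := 'D_(ebasis R i) f x.

Definition C2_on (R : realType) (n : nat) (A : set 'rV[R]_n) (f : 'rV[R]_n -> R) :=
  forall x, A x ->
    (forall i, derivable f x (ebasis R i)) /\
    (forall i j, derivable (partial f i) x (ebasis R j)) /\
    (forall i j, {for x, continuous (partial (partial f i) j)}).

Definition bivector (R : realType) (n : nat) := 'I_n -> 'I_n -> 'rV[R]_n -> R.

Definition bracket (R : realType) (n : nat) (P : bivector R n)
  (f g : 'rV[R]_n -> R) : 'rV[R]_n -> R :=
  fun u => \sum_(a < n) \sum_(b < n) P a b u * partial f a u * partial g b u.

Definition is_Poisson_on (R : realType) (n : nat) (D : set 'rV[R]_n) (P : bivector R n) :=
  (forall a b u, D u -> P a b u = - P b a u) /\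
  forall f g h : 'rV[R]_n -> R, C2_on D f -> C2_on D g -> C2_on D h ->
    forall u, D u ->
      bracket P f (bracket P g h) u + bracket P g (bracket P h f) u
      + bracket P h (bracket P f g) u = 0.

Definition pencil (R : realType) (n : nat) (P0 P1 : bivector R n) (lam : R) : bivector R n :=
  fun a b u => P0 a b u + lam * P1 a b u.

Definition compatible_Poisson_pencil (R : realType) (n : nat) (D : set 'rV[R]_n)
  (P0 P1 : bivector R n) :=
  is_Poisson_on D P0 /\ is_Poisson_on D P1 /\
  forall lam : R, is_Poisson_on D (pencil P0 P1 lam).

(* coordinates on B x R^2: u = (x, y, z, p0, p1) = (u_0, ..., u_4);
   proj3 u = (x, y, z) *)
Definition proj3 (R : realType) (u : 'rV[R]_5) : 'rV[R]_3 :=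
  \row_(i < 3) u 0 (widen_ord (isT : (3 <= 5)%N) i).

Definition domain5 (R : realType) (B : set 'rV[R]_3) : set 'rV[R]_5 :=
  [set u | B (proj3 u)].

Definition i3x : 'I_3 := @Ordinal 3 0 isT.
Definition i3y : 'I_3 := @Ordinal 3 1 isT.
Definition i3z : 'I_3 := @Ordinal 3 2 isT.

Definition P0_hirota (R : realType) (w : 'rV[R]_3 -> R) : bivector R 5 :=
  fun i j u =>
    let X := proj3 u in
    let wx := partial w i3x X in
    let wy := partial w i3y X in
    let wz := partial w i3z X in
    match val i, val j with
    | 0%N, 3%N => - (wz / wx)
    | 0%N, 4%N => - (wy / wx)
    | 1%N, 4%N => 1
    | 2%N, 3%N => 1
    | 3%N, 0%N => wz / wx
    | 3%N, 2%N => -1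
    | 4%N, 0%N => wy / wx
    | 4%N, 1%N => -1
    | _, _ => 0
    end.

Definition P1_hirota (R : realType) (a b : R) : bivector R 5 :=
  fun i j _ =>
    match val i, val j with
    | 1%N, 4%N => b
    | 2%N, 3%N => a
    | 3%N, 2%N => - a
    | 4%N, 1%N => - b
    | _, _ => 0
    end.

(* Main.v *)
Require Import Defs.
From HB Require Import structures.
From mathcomp Require Import all_boot all_order all_algebra.
From mathcomp Require Import all_classical all_reals all_analysis.
From mathcomp Require Import ring lra.
Set Implicit Arguments. Unset Strict Implicit. Unset Printing Implicit Defensive.
Import Order.TTheory GRing.Theory Num.Theory.
Import numFieldNormedType.Exports.
Local Open Scope classical_set_scope.
Local Open Scope ring_scope.



Section Alg.
Variables (R : realType) (n : nat).
Local Notation I := 'I_n.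

Lemma sw12 (F : I -> I -> I -> I -> R) :
  \sum_a \sum_b \sum_c \sum_d F a b c d = \sum_b \sum_a \sum_c \sum_d F a b c d.
Proof. exact: exchange_big. Qed.
Lemma sw23 (F : I -> I -> I -> I -> R) :
  \sum_a \sum_b \sum_c \sum_d F a b c d = \sum_a \sum_c \sum_b \sum_d F a b c d.
Proof. by apply: eq_bigr => a _; exact: exchange_big. Qed.
Lemma sw34 (F : I -> I -> I -> I -> R) :
  \sum_a \sum_b \sum_c \sum_d F a b c d = \sum_a \sum_b \sum_d \sum_c F a b c d.
Proof. by apply: eq_bigr => a _; apply: eq_bigr => b _; exact: exchange_big. Qed.

Variables (p : I -> I -> R) (dp : I -> I -> I -> R).
Hypothesis pskew : forall a b, p a b = - p b a.

Definition DB (g1 : I -> R) (g2 : I -> I -> R) (h1 : I -> R) (h2 : I -> I -> R) (c : I) :=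
  \sum_j \sum_k (dp c j k * g1 j * h1 k + p j k * g2 j c * h1 k + p j k * g1 j * h2 k c).
Definition Br (f1 : I -> R) (X : I -> R) := \sum_a \sum_c p a c * f1 a * X c.
Definition Sch i j k := \sum_a (p i a * dp a j k + p j a * dp a k i + p k a * dp a i j).

Definition T0 f1 g1 h1 := \sum_a \sum_c \sum_j \sum_k p a c * f1 a * (dp c j k * g1 j * h1 k).
Definition TA f1 (g2 : I -> I -> R) h1 := \sum_a \sum_c \sum_j \sum_k p a c * f1 a * (p j k * g2 j c * h1 k).
Definition TB f1 g1 (h2 : I -> I -> R) := \sum_a \sum_c \sum_j \sum_k p a c * f1 a * (p j k * g1 j * h2 k c).

Lemma Br_DB f1 g1 g2 h1 h2 :
  Br f1 (DB g1 g2 h1 h2) = T0 f1 g1 h1 + TA f1 g2 h1 + TB f1 g1 h2.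
Proof.
rewrite /Br /DB /T0 /TA /TB -!big_split /=; apply: eq_bigr => a _.
rewrite -!big_split /=; apply: eq_bigr => c _.
rewrite mulr_sumr -!big_split /=; apply: eq_bigr => j _.
rewrite mulr_sumr -!big_split /=; apply: eq_bigr => k _.
by rewrite !mulrDr.
Qed.

Lemma TAB f1 g2 h1 (g2sym : forall i j, g2 i j = g2 j i) :
  TA f1 g2 h1 + TB h1 f1 g2 = 0.
Proof.
rewrite /TA /TB.
have -> : \sum_a \sum_c \sum_j \sum_k p a c * h1 a * (p j k * f1 j * g2 k c)
  = \sum_j \sum_k \sum_c \sum_a p a c * h1 a * (p j k * f1 j * g2 k c).
  rewrite sw12 sw23 sw12 sw34 sw23 sw34; done.
rewrite -big_split /=; apply: big1 => a _.
rewrite -big_split /=; apply: big1 => c _.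
rewrite -big_split /=; apply: big1 => j _.
rewrite -big_split /=; apply: big1 => k _.
rewrite (pskew k j) (g2sym c j); ring.
Qed.

Definition Jac f1 f2 g1 g2 h1 h2 :=
  Br f1 (DB g1 g2 h1 h2) + Br g1 (DB h1 h2 f1 f2) + Br h1 (DB f1 f2 g1 g2).

Lemma Jac_Sch f1 f2 g1 g2 h1 h2
  (f2s : forall i j, f2 i j = f2 j i)
  (g2s : forall i j, g2 i j = g2 j i)
  (h2s : forall i j, h2 i j = h2 j i) :
  Jac f1 f2 g1 g2 h1 h2 = \sum_i \sum_j \sum_k Sch i j k * f1 i * g1 j * h1 k.
Proof.
rewrite /Jac !Br_DB.
have e1 := TAB f1 h1 g2s. have e2 := TAB g1 f1 h2s. have e3 := TAB h1 g1 f2s.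
have -> : T0 f1 g1 h1 + TA f1 g2 h1 + TB f1 g1 h2 + (T0 g1 h1 f1 + TA g1 h2 f1 + TB g1 h1 f2) +
  (T0 h1 f1 g1 + TA h1 f2 g1 + TB h1 f1 g2) =
  T0 f1 g1 h1 + T0 g1 h1 f1 + T0 h1 f1 g1 + (TA f1 g2 h1 + TB h1 f1 g2)
  + (TA g1 h2 f1 + TB f1 g1 h2) + (TA h1 f2 g1 + TB g1 h1 f2) by ring.
rewrite e1 e2 e3 !addr0 /T0 /Sch.
have -> : \sum_i \sum_j \sum_k
   (\sum_a (p i a * dp a j k + p j a * dp a k i + p k a * dp a i j)) * f1 i * g1 j * h1 k
  = \sum_i \sum_j \sum_k \sum_a (p i a * f1 i * (dp a j k * g1 j * h1 k))
  + \sum_i \sum_j \sum_k \sum_a (p j a * g1 j * (dp a k i * h1 k * f1 i))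
  + \sum_i \sum_j \sum_k \sum_a (p k a * h1 k * (dp a i j * f1 i * g1 j)).
  rewrite -!big_split /=; apply: eq_bigr => i _.
  rewrite -!big_split /=; apply: eq_bigr => j _.
  rewrite -!big_split /=; apply: eq_bigr => k _.
  rewrite !mulr_suml -!big_split /=; apply: eq_bigr => a _; ring.
congr (_ + _ + _).
- by rewrite [LHS]sw23 [LHS]sw34.
- by rewrite [LHS]sw34 [LHS]sw23 [LHS]sw12 [LHS]sw34.
- by rewrite [LHS]sw23 [LHS]sw12 [LHS]sw34 [LHS]sw23.
Qed.
End Alg.



Section Ana.
Variable R : realType.

Lemma line_eq (V1 V2 : normedModType R) (W : normedModType R) (f : V1 -> W) (g : V2 -> W)
  x v y w : (forall h : R, f (h *: v + x) = g (h *: w + y)) ->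
  'D_v f x = 'D_w g y /\ (derivable f x v <-> derivable g y w).
Proof.
move=> H; have H0 := H 0; rewrite !scale0r !add0r in H0.
have E : (fun h : R => h^-1 *: ((f \o shift x) (h *: v) - f x)) =
         (fun h : R => h^-1 *: ((g \o shift y) (h *: w) - g y)).
  by apply/funext => h /=; rewrite H H0.
by rewrite /derive /derivable E.
Qed.

Lemma line_derive (n : nat) (f : 'rV[R]_n -> R) (v y : 'rV[R]_n) (s : R) :
  derivable f (s *: v + y) v ->
  is_derive s 1 (fun t : R => f (t *: v + y)) ('D_v f (s *: v + y)).
Proof.
move=> df.
have H : forall h : R, (fun t : R => f (t *: v + y)) (h *: 1 + s) = f (h *: v + (s *: v + y)).
  by move=> h /=; rewrite [h *: 1]mulr1 scalerDl addrA.
have [E1 E2] := @line_eq _ _ _ (fun t : R => f (t *: v + y)) f s 1 (s *: v + y) v H.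
apply: DeriveDef; first by apply/E2.
by rewrite E1.
Qed.

Lemma mvt_line2 (n : nat) (f : 'rV[R]_n -> R) v y1 y2 (h : R) : 0 < h ->
  (forall s, 0 <= s <= h -> derivable f (s *: v + y1) v /\ derivable f (s *: v + y2) v) ->
  exists2 s, 0 < s < h & (f (h *: v + y1) - f y1) - (f (h *: v + y2) - f y2)
     = ('D_v f (s *: v + y1) - 'D_v f (s *: v + y2)) * h.
Proof.
move=> h0 Hd.
pose phi := fun t : R => f (t *: v + y1) - f (t *: v + y2).
have Hder : forall t, 0 <= t <= h ->
   is_derive t 1 phi ('D_v f (t *: v + y1) - 'D_v f (t *: v + y2)).
  move=> t /Hd [d1 d2]; rewrite /phi.
  have := line_derive d1; have := line_derive d2.
  move=> D2 D1.
  exact: (@is_deriveB _ _ _ (fun t0 : R => f (t0 *: v + y1)) (fun t0 : R => f (t0 *: v + y2))).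
have H1 : forall x, x \in `]0, h[ ->
    is_derive x 1 phi ('D_v f (x *: v + y1) - 'D_v f (x *: v + y2)).
  move=> x; rewrite in_itv /= => /andP [x0 xh]; apply: Hder.
  by rewrite !ltW.
have H2 : {within `[0, h], continuous phi}.
  apply: derivable_within_continuous => x; rewrite in_itv /= => /andP [x0 xh].
  by have /Hder [] : 0 <= x <= h by rewrite x0 xh.
have [c] := MVT h0 H1 H2.
rewrite in_itv /= => /andP [c0 ch] E; exists c; first by rewrite c0 ch.
move: E; rewrite /phi !scale0r !add0r subr0 => <-.
move: (f (h *: v + y1)) (f y1) (f (h *: v + y2)) (f y2) => A B C D0.
ring.
Qed.

Lemma mvt_line (n : nat) (f : 'rV[R]_n -> R) v y (h : R) : 0 < h ->
  (forall s, 0 <= s <= h -> derivable f (s *: v + y) v) ->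
  exists2 s, 0 < s < h & f (h *: v + y) - f y = 'D_v f (s *: v + y) * h.
Proof.
move=> h0 Hd.
pose phi := fun t : R => f (t *: v + y).
have Hder : forall t, 0 <= t <= h -> is_derive t 1 phi ('D_v f (t *: v + y)).
  by move=> t /Hd d1; exact: line_derive.
have H1 : forall x, x \in `]0, h[ -> is_derive x 1 phi ('D_v f (x *: v + y)).
  move=> x; rewrite in_itv /= => /andP [x0 xh]; apply: Hder.
  by rewrite !ltW.
have H2 : {within `[0, h], continuous phi}.
  apply: derivable_within_continuous => x; rewrite in_itv /= => /andP [x0 xh].
  by have /Hder [] : 0 <= x <= h by rewrite x0 xh.
have [c] := MVT h0 H1 H2.
rewrite in_itv /= => /andP [c0 ch] E; exists c; first by rewrite c0 ch.
by move: E; rewrite /phi !scale0r !add0r subr0.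
Qed.

Lemma square (n : nat) (A : set 'rV[R]_n) (f : 'rV[R]_n -> R) x i j (h : R) :
  0 < h -> C2_on A f ->
  (forall a b, 0 <= a <= h -> 0 <= b <= h -> A (a *: ebasis R i + (b *: ebasis R j + x))) ->
  exists s t, (0 <= s <= h) /\ (0 <= t <= h) /\
   f (h *: ebasis R i + (h *: ebasis R j + x)) - f (h *: ebasis R j + x)
     - (f (h *: ebasis R i + x) - f x)
   = partial (partial f i) j (t *: ebasis R j + (s *: ebasis R i + x)) * h * h.
Proof.
move=> h0 C2 Hsq.
set ei := ebasis R i; set ej := ebasis R j.
have H00 : (0:R) <= 0 <= h by apply/andP; split; [exact: lexx|exact: ltW].
have Hhh : 0 <= h <= h by apply/andP; split; [exact: ltW|exact: lexx].
have Hsq0 : forall a, 0 <= a <= h -> A (a *: ei + x).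
  by move=> a ha; have := Hsq a 0 ha H00; rewrite scale0r add0r.
have [s sh E1] := @mvt_line2 n f ei (h *: ej + x) x h h0 (fun s hs =>
   conj ((C2 _ (Hsq s h hs Hhh)).1 i) ((C2 _ (Hsq0 s hs)).1 i)).
have sh' : 0 <= s <= h by case/andP: sh => ? ?; rewrite !ltW.
have [t th E2] := @mvt_line n (partial f i) ej (s *: ei + x) h h0 (fun t ht =>
   let H := (C2 _ (Hsq s t sh' ht)).2.1 i j in
   eq_ind _ (fun z => derivable (partial f i) z ej) H _ (addrCA _ _ _)).
have th' : 0 <= t <= h by case/andP: th => ? ?; rewrite !ltW.
exists s, t; split => //; split => //.
rewrite E1; rewrite /partial -/ei -/ej -E2.
have -> : s *: ei + (h *: ej + x) = h *: ej + (s *: ei + x) by rewrite addrCA.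
done.
Qed.

Lemma schwarz (n : nat) (A : set 'rV[R]_n) (f : 'rV[R]_n -> R) x i j :
  open A -> A x -> C2_on A f ->
  partial (partial f i) j x = partial (partial f j) i x.
Proof.
move=> oA Ax C2.
pose F := partial (partial f i) j; pose G := partial (partial f j) i.
change (F x = G x).
case: (eqVneq (F x) (G x)) => [E|dne]; first exact: E.
have d0 : 0 < `|F x - G x| by rewrite normr_gt0 subr_eq0.
pose d : R := `|F x - G x|.
exfalso.
have e0 : 0 < d / 2 by rewrite divr_gt0.
have [_ [_ Fc]] := C2 x Ax.
have Fc1 := Fc i j; have Gc1 := Fc j i.
have /cvgrPdist_lt /(_ _ e0) /nbhsr0P HF := Fc1.
have /cvgrPdist_lt /(_ _ e0) /nbhsr0P HG := Gc1.
have /nbhsr0P HA : nbhs x A by apply: open_nbhs_nbhs; split.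
have [e [He0 [HAe [HFe HGe]]]] :=
  filter_ex (filterI (nbhs_right_gt 0) (filterI HA (filterI HF HG))).
pose ei := ebasis R i; pose ej := ebasis R j.
pose K : R := `|ei| + `|ej| + 1.
have K0 : 0 < K by rewrite /K ltr_wpDl // addr_ge0.
pose h : R := e / K.
have h0 : 0 < h by rewrite divr_gt0.
have hK : h * K = e by rewrite /h divfK // gt_eqF.
have Hb : forall a b, 0 <= a <= h -> 0 <= b <= h -> `|x - (a *: ei + (b *: ej + x))| <= e.
  move=> a b /andP[a0 ah] /andP[b0 bh].
  rewrite addrA opprD addrCA subrr addr0 normrN.
  apply: (le_trans (ler_normD _ _)); rewrite !normrZ (ger0_norm a0) (ger0_norm b0).
  have ne0 := normr_ge0 ei; have nj0 := normr_ge0 ej.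
  rewrite -hK /K; move: (`|ei|) (`|ej|) ne0 nj0 => u v u0 v0; nra.
have HsqIJ : forall a b, 0 <= a <= h -> 0 <= b <= h -> A (a *: ebasis R i + (b *: ebasis R j + x)).
  by move=> a b ha hb; apply: HAe; apply: Hb.
have HsqJI : forall a b, 0 <= a <= h -> 0 <= b <= h -> A (a *: ebasis R j + (b *: ebasis R i + x)).
  by move=> a b ha hb; rewrite addrCA; apply: HAe; apply: Hb.
have [s [t [hs [ht E1]]]] := square h0 C2 HsqIJ.
have [s' [t' [hs' [ht' E2]]]] := square h0 C2 HsqJI.
rewrite [h *: ebasis R j + (h *: ebasis R i + x)]addrCA in E2.
have hn0 : h != 0 by rewrite gt_eqF.
have H1 := HFe _ (Hb _ _ hs ht).
have H2 := HGe _ (Hb _ _ ht' hs').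
rewrite [s *: ei + _]addrCA in H1.
move: H1 H2 E1 E2.
move: (partial (partial f i) j (t *: ebasis R j + (s *: ebasis R i + x)))
      (partial (partial f j) i (t' *: ebasis R i + (s' *: ebasis R j + x))) => P Q H1 H2 E1 E2.
have dd : d = `|partial (partial f i) j x - partial (partial f j) i x| by [].
clearbody d.
move: H1 H2 dd; move: (partial (partial f i) j x) (partial (partial f j) i x) => U V H1 H2 dd.
move: E1 E2.
move: (f (h *: ebasis R i + (h *: ebasis R j + x))) (f (h *: ebasis R j + x))
      (f (h *: ebasis R i + x)) (f x) => X Y Z W E1 E2.
have E : P * h * h = Q * h * h by rewrite -E1 -E2; ring.
have PQ := mulIf hn0 (mulIf hn0 E).
have : d < d.
  rewrite [X in X < _]dd (_ : U - V = (U - P) + (Q - V)); last by rewrite PQ addrA subrK.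
  apply: (le_lt_trans (ler_normD _ _)).
  rewrite [X in _ < X](splitr d) [`|Q - V|]distrC; exact: ltrD.
by rewrite ltxx.
Qed.


Lemma partial_bracket (n : nat) (P : bivector R n) (g h : 'rV[R]_n -> R) u c :
  (forall a b, derivable (P a b) u (ebasis R c)) ->
  (forall a, derivable (partial g a) u (ebasis R c)) ->
  (forall b, derivable (partial h b) u (ebasis R c)) ->
  partial (bracket P g h) c u =
  \sum_j \sum_k (partial (P j k) c u * partial g j u * partial h k u
     + P j k u * partial (partial g j) c u * partial h k u
     + P j k u * partial g j u * partial (partial h k) c u).
Proof.
move=> dP dg dh.
have -> : bracket P g h = \sum_j \sum_k (P j k * partial g j * partial h k).
  rewrite fct_sumE; apply/funext => v /=; apply: eq_bigr => j _.
  by rewrite fct_sumE.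
rewrite /partial derive_sum; last first.
  move=> j; apply: derivable_sum => k; apply: derivableM; last exact: dh.
  exact: derivableM (dP j k) (dg j).
apply: eq_bigr => j _.
rewrite derive_sum; last first.
  move=> k; apply: derivableM; last exact: dh.
  exact: derivableM (dP j k) (dg j).
apply: eq_bigr => k _.
rewrite deriveM; [|exact: derivableM (dP j k) (dg j)|exact: dh].
rewrite deriveM /=; [|exact: dP|exact: dg].
have fM : forall (X Y : 'rV[R]_n -> R), (X * Y) u = X u * Y u by [].
have sE : forall a b : R, a *: b = a * b by [].
rewrite fM !sE.
move: ('D_(ebasis R c) (P j k) u) ('D_(ebasis R c) (partial g j) u) ('D_(ebasis R c) (partial h k) u).
rewrite /partial.
move: (P j k u) ('D_(ebasis R j) g u) ('D_(ebasis R k) h u) => A B C D1 D2 D3.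
ring.
Qed.


Lemma proj3B (u v : 'rV[R]_5) : proj3 (u - v) = proj3 u - proj3 v.
Proof. by apply/rowP => i; rewrite !mxE. Qed.

Lemma proj3_norm (d : 'rV[R]_5) : `|proj3 d| <= `|d|.
Proof.
rewrite [leLHS]/Num.Def.normr /= mx_normrE (bigmax_le _ (normr_ge0 _)) //= => -[i j] _.
rewrite mxE /= [leRHS]/Num.Def.normr /= mx_normrE.
exact: (le_bigmax 0 (fun ij : 'I_1 * 'I_5 => `|d ij.1 ij.2|) (0, widen_ord (isT : (3 <= 5)%N) j)).
Qed.

Lemma open_domain5 (B : set 'rV[R]_3) : open B -> open (domain5 B).
Proof.
rewrite !openE => oB u Du.
have := oB _ Du; rewrite /interior => /nbhs_normP [e e0 He].
have H := (@nbhs_normP R _ u (domain5 B)).2.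
apply: H.
exists e => //= v /= uv; apply: He => /=.
by rewrite -proj3B; apply: le_lt_trans (proj3_norm _) uv.
Qed.


Definition ucoord (n : nat) (i : 'I_n) : 'rV[R]_n -> R := fun u => u 0 i.

Lemma coord_cvg (n : nat) (i a : 'I_n) (u : 'rV[R]_n) :
  (fun h : R => h^-1 *: ((ucoord i \o shift u) (h *: ebasis R a) - ucoord i u)) @ 0^'
    --> ((a == i)%:R : R).
Proof.
apply: cvg_near_cst; near=> h.
have hn0 : h != 0 by near: h; exact: nbhs_dnbhs_neq.
rewrite /ucoord /= !mxE eqxx /= [i == a]eq_sym.
by rewrite addrK; exact: (mulKf hn0).
Unshelve. all: by end_near.
Qed.

Lemma partial_coord (n : nat) (i a : 'I_n) (u : 'rV[R]_n) :
  partial (ucoord i) a u = (a == i)%:R.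
Proof. rewrite /partial /derive; apply: cvg_lim; [exact: norm_hausdorff | exact: coord_cvg]. Qed.

Lemma derivable_coord (n : nat) (i a : 'I_n) (u : 'rV[R]_n) :
  derivable (ucoord i) u (ebasis R a).
Proof. by apply/cvg_ex; eexists; exact: coord_cvg. Qed.

Lemma C2_coord (n : nat) (A : set 'rV[R]_n) (i : 'I_n) : C2_on A (ucoord i).
Proof.
have E : forall a, partial (ucoord i) a = cst ((a == i)%:R).
  by move=> a; apply/funext => v; rewrite partial_coord.
move=> x _; split; first by move=> a; exact: derivable_coord.
split; first by move=> a b; rewrite E; exact: derivable_cst.
move=> a b; have -> : partial (partial (ucoord i) a) b = cst 0.
  by apply/funext => v; rewrite E /partial derive_cst.
exact: cst_continuous.
Qed.
End Ana.



Section Gen.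
Variable R : realType.

Lemma bracket_expr (n : nat) (D : set 'rV[R]_n) (P : bivector R n) f g h u :
  D u -> C2_on D g -> C2_on D h ->
  (forall a b c, derivable (P a b) u (ebasis R c)) ->
  bracket P f (bracket P g h) u =
  Br (fun a b => P a b u) (fun a => partial f a u)
    (DB (fun a b => P a b u) (fun c a b => partial (P a b) c u)
      (fun a => partial g a u) (fun a c => partial (partial g a) c u)
      (fun a => partial h a u) (fun a c => partial (partial h a) c u)).
Proof.
move=> Du Cg Ch dP.
transitivity (\sum_a \sum_c P a c u * partial f a u * partial (bracket P g h) c u); first by [].
rewrite /Br; apply: eq_bigr => a _; apply: eq_bigr => c _.
congr (_ * _); rewrite partial_bracket //.
- by move=> j; exact: (Cg u Du).2.1.
- by move=> j; exact: (Ch u Du).2.1.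
Qed.


Lemma sum_delta (n : nat) (F : 'I_n -> R) (i : 'I_n) :
  \sum_(j < n) F j * (j == i)%:R = F i.
Proof.
rewrite (bigD1 i) //= eqxx mulr1 big1 ?addr0 // => j /negbTE ->.
by rewrite mulr0.
Qed.

Lemma jacobi_Sch (n : nat) (D : set 'rV[R]_n) (P : bivector R n) f g h u :
  open D -> (forall a b, P a b u = - P b a u) ->
  (forall a b c, derivable (P a b) u (ebasis R c)) ->
  D u -> C2_on D f -> C2_on D g -> C2_on D h ->
  bracket P f (bracket P g h) u + bracket P g (bracket P h f) u
      + bracket P h (bracket P f g) u =
  \sum_i \sum_j \sum_k Sch (fun a b => P a b u) (fun c a b => partial (P a b) c u) i j k
     * partial f i u * partial g j u * partial h k u.
Proof.
move=> oD sk dP Du Cf Cg Ch.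
rewrite (bracket_expr f Du Cg Ch dP) (bracket_expr g Du Ch Cf dP) (bracket_expr h Du Cf Cg dP).
have E := @Jac_Sch R n (fun a b => P a b u) (fun c a b => partial (P a b) c u) sk
  (fun a => partial f a u) (fun a c => partial (partial f a) c u)
  (fun a => partial g a u) (fun a c => partial (partial g a) c u)
  (fun a => partial h a u) (fun a c => partial (partial h a) c u)
  (fun i j => schwarz _ _ oD Du Cf) (fun i j => schwarz _ _ oD Du Cg) (fun i j => schwarz _ _ oD Du Ch).
exact: E.
Qed.

Lemma poisson_char (n : nat) (D : set 'rV[R]_n) (P : bivector R n) :
  open D -> (forall a b u, P a b u = - P b a u) ->
  (forall a b c u, D u -> derivable (P a b) u (ebasis R c)) ->
  (is_Poisson_on D P <->
   forall u, D u -> forall i j k,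
     Sch (fun a b => P a b u) (fun c a b => partial (P a b) c u) i j k = 0).
Proof.
move=> oD sk dP; split.
- move=> [_ J] u Du i j k.
  have := J _ _ _ (C2_coord (A:=D) i) (C2_coord (A:=D) j) (C2_coord (A:=D) k) u Du.
  rewrite (jacobi_Sch oD (fun a b => sk a b u) (fun a b c => dP a b c u Du) Du
    (C2_coord (A:=D) i) (C2_coord (A:=D) j) (C2_coord (A:=D) k)).
  under eq_bigr do under eq_bigr do under eq_bigr do rewrite !partial_coord.
  under eq_bigr do under eq_bigr do rewrite sum_delta.
  under eq_bigr do rewrite sum_delta.
  by rewrite sum_delta.
- move=> HS; split => [a b u _|f g h Cf Cg Ch u Du]; first exact: sk.
  rewrite (jacobi_Sch oD (fun a b => sk a b u) (fun a b c => dP a b c u Du) Du Cf Cg Ch).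
  apply: big1 => i _; apply: big1 => j _; apply: big1 => k _.
  by rewrite HS // !mul0r.
Qed.
End Gen.



Section Spec.
Variable R : realType.

Definition pQ (A C s t r : R) (i j : 'I_5) : R :=
  match val i, val j with
  | 0%N, 3%N => - s * A
  | 0%N, 4%N => - s * C
  | 1%N, 4%N => t
  | 2%N, 3%N => r
  | 3%N, 0%N => s * A
  | 3%N, 2%N => - r
  | 4%N, 0%N => s * C
  | 4%N, 1%N => - t
  | _, _ => 0
  end.

Definition dsel (x y z : R) (c : 'I_5) : R :=
  match val c with 0%N => x | 1%N => y | 2%N => z | _ => 0 end.

Definition dpQ (Ax Ay Az Cx Cy Cz s : R) (c i j : 'I_5) : R :=
  match val i, val j with
  | 0%N, 3%N => - s * dsel Ax Ay Az c
  | 0%N, 4%N => - s * dsel Cx Cy Cz c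
  | 3%N, 0%N => s * dsel Ax Ay Az c
  | 4%N, 0%N => s * dsel Cx Cy Cz c
  | _, _ => 0
  end.

Definition Jv (A C Ax Ay Cx Cz s t r : R) := s * (s * (A * Cx - C * Ax) - r * Cz + t * Ay).

Definition o0 : 'I_5 := @Ordinal 5 0 isT.
Definition o1 : 'I_5 := @Ordinal 5 1 isT.
Definition o2 : 'I_5 := @Ordinal 5 2 isT.
Definition o3 : 'I_5 := @Ordinal 5 3 isT.
Definition o4 : 'I_5 := @Ordinal 5 4 isT.

Lemma sum5 (F : 'I_5 -> R) : \sum_(a < 5) F a = F o0 + F o1 + F o2 + F o3 + F o4.
Proof.
transitivity (0 + F o0 + F o1 + F o2 + F o3 + F o4); last by rewrite add0r.
rewrite !big_ord_recr big_ord0 /=.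
by congr (_ + F _ + F _ + F _ + F _ + F _); apply/val_inj.
Qed.

Lemma pQ_skew A C s t r i j : pQ A C s t r i j = - pQ A C s t r j i.
Proof.
case: i => [[|[|[|[|[|i]]]]] Hi] //; case: j => [[|[|[|[|[|j]]]]] Hj] //=;
  rewrite /pQ /=; ring.
Qed.

Lemma Sch_alg A C Ax Ay Az Cx Cy Cz s t r i j k :
  exists c : R, Sch (pQ A C s t r) (dpQ Ax Ay Az Cx Cy Cz s) i j k
    = c * Jv A C Ax Ay Cx Cz s t r.
Proof.
rewrite /Sch sum5 /Jv /pQ /dpQ /dsel.
case: i => [[|[|[|[|[|i]]]]] Hi] //; case: j => [[|[|[|[|[|j]]]]] Hj] //;
case: k => [[|[|[|[|[|k]]]]] Hk] //=;
  first [ exists 0; ring | exists 1; ring | exists (-1); ring ].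
Qed.

Lemma Sch_alg034 A C Ax Ay Az Cx Cy Cz s t r :
  Sch (pQ A C s t r) (dpQ Ax Ay Az Cx Cy Cz s) o0 o3 o4 = Jv A C Ax Ay Cx Cz s t r.
Proof. rewrite /Sch sum5 /Jv /pQ /dpQ /dsel /=; ring. Qed.
End Spec.



Section Spec2.
Variable R : realType.

Lemma proj3_line (h : R) (v u : 'rV[R]_5) : proj3 (h *: v + u) = h *: proj3 v + proj3 u.
Proof. by apply/rowP => i; rewrite !mxE. Qed.

Lemma proj3_e0 : proj3 (ebasis R o0) = ebasis R i3x.
Proof. by apply/rowP => i; rewrite !mxE; case: i => [[|[|[|?]]] ?]. Qed.
Lemma proj3_e1 : proj3 (ebasis R o1) = ebasis R i3y.
Proof. by apply/rowP => i; rewrite !mxE; case: i => [[|[|[|?]]] ?]. Qed.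
Lemma proj3_e2 : proj3 (ebasis R o2) = ebasis R i3z.
Proof. by apply/rowP => i; rewrite !mxE; case: i => [[|[|[|?]]] ?]. Qed.
Lemma proj3_e3 : proj3 (ebasis R o3) = 0.
Proof. by apply/rowP => i; rewrite !mxE; case: i => [[|[|[|?]]] ?]. Qed.
Lemma proj3_e4 : proj3 (ebasis R o4) = 0.
Proof. by apply/rowP => i; rewrite !mxE; case: i => [[|[|[|?]]] ?]. Qed.


Lemma G_derive (F : 'rV[R]_3 -> R) (u v : 'rV[R]_5) (w : 'rV[R]_3) :
  proj3 v = w ->
  'D_v (fun x => F (proj3 x)) u = 'D_w F (proj3 u) /\
  (derivable (fun x => F (proj3 x)) u v <-> derivable F (proj3 u) w).
Proof.
move=> <-; apply: (@line_eq R _ _ _ (fun x => F (proj3 x)) F u v (proj3 u) (proj3 v)).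
by move=> h; rewrite proj3_line.
Qed.

Lemma G_derive_c (F : 'rV[R]_3 -> R) (c : 'I_5) (u : 'rV[R]_5) :
  (forall c', derivable F (proj3 u) (ebasis R c')) ->
  derivable (fun x => F (proj3 x)) u (ebasis R c) /\
  'D_(ebasis R c) (fun x => F (proj3 x)) u =
    dsel (partial F i3x (proj3 u)) (partial F i3y (proj3 u)) (partial F i3z (proj3 u)) c.
Proof.
move=> dF.
case: c => [[|[|[|[|[|c]]]]] Hc]; last by [].
- have -> : Ordinal Hc = o0 by apply/val_inj.
  have [E1 E2] := G_derive F u proj3_e0.
  by split; [apply/E2; exact: dF | rewrite E1].
- have -> : Ordinal Hc = o1 by apply/val_inj.
  have [E1 E2] := G_derive F u proj3_e1.
  by split; [apply/E2; exact: dF | rewrite E1].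
- have -> : Ordinal Hc = o2 by apply/val_inj.
  have [E1 E2] := G_derive F u proj3_e2.
  by split; [apply/E2; exact: dF | rewrite E1].
- have -> : Ordinal Hc = o3 by apply/val_inj.
  have [E1 E2] := G_derive F u proj3_e3.
  by split; [apply/E2; exact: derivable0 | rewrite E1 derive0].
- have -> : Ordinal Hc = o4 by apply/val_inj.
  have [E1 E2] := G_derive F u proj3_e4.
  by split; [apply/E2; exact: derivable0 | rewrite E1 derive0].
Qed.

Lemma kF_derive (F : 'rV[R]_3 -> R) (k : R) (c : 'I_5) (u : 'rV[R]_5) :
  (forall c', derivable F (proj3 u) (ebasis R c')) ->
  derivable (fun x => k * F (proj3 x)) u (ebasis R c) /\
  partial (fun x => k * F (proj3 x)) c u =
    k * dsel (partial F i3x (proj3 u)) (partial F i3y (proj3 u)) (partial F i3z (proj3 u)) c.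
Proof.
move=> dF; have [d1 e1] := G_derive_c c dF.
have -> : (fun x => k * F (proj3 x)) = cst k * (fun x => F (proj3 x)) by [].
split; first exact: derivableM (derivable_cst k u _) d1.
rewrite /partial deriveM; [|exact: derivable_cst|exact: d1].
by rewrite e1 derive_cst scaler0 addr0.
Qed.


Definition Qb (Af Cf : 'rV[R]_3 -> R) (s t r : R) : bivector R 5 :=
  fun i j u => pQ (Af (proj3 u)) (Cf (proj3 u)) s t r i j.

Definition dQb (Af Cf : 'rV[R]_3 -> R) (s : R) (u : 'rV[R]_5) :=
  dpQ (partial Af i3x (proj3 u)) (partial Af i3y (proj3 u)) (partial Af i3z (proj3 u))
      (partial Cf i3x (proj3 u)) (partial Cf i3y (proj3 u)) (partial Cf i3z (proj3 u)) s.

Lemma partial_Qb Af Cf s t r i j c u :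
  (forall c', derivable Af (proj3 u) (ebasis R c')) ->
  (forall c', derivable Cf (proj3 u) (ebasis R c')) ->
  derivable (Qb Af Cf s t r i j) u (ebasis R c) /\
  partial (Qb Af Cf s t r i j) c u = dQb Af Cf s u c i j.
Proof.
move=> dA dC.
case: i => [[|[|[|[|[|i]]]]] Hi]; try (by rewrite !ltnS ltn0 in Hi);
case: j => [[|[|[|[|[|j]]]]] Hj]; try (by rewrite !ltnS ltn0 in Hj);
  rewrite /Qb /pQ /dQb /dpQ /=;
  match goal with
  | |- context[Af (proj3 _)] => exact: kF_derive dA
  | |- context[Cf (proj3 _)] => exact: kF_derive dC
  | _ => by split; [exact: derivable_cst | rewrite /partial derive_cst]
  end.
Qed.


Lemma Qb_poisson (B : set 'rV[R]_3) Af Cf s t r : open B ->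
  (forall X, B X -> forall c', derivable Af X (ebasis R c') /\ derivable Cf X (ebasis R c')) ->
  (is_Poisson_on (domain5 B) (Qb Af Cf s t r) <->
   forall u, domain5 B u ->
     Jv (Af (proj3 u)) (Cf (proj3 u)) (partial Af i3x (proj3 u)) (partial Af i3y (proj3 u))
        (partial Cf i3x (proj3 u)) (partial Cf i3z (proj3 u)) s t r = 0).
Proof.
move=> oB dAC.
have dA : forall u, domain5 B u -> forall c', derivable Af (proj3 u) (ebasis R c').
  by move=> u Du c'; exact: (dAC _ Du c').1.
have dC : forall u, domain5 B u -> forall c', derivable Cf (proj3 u) (ebasis R c').
  by move=> u Du c'; exact: (dAC _ Du c').2.
rewrite (poisson_char (open_domain5 oB)); first last.
- by move=> a b c u Du; exact: (partial_Qb s t r a b c (dA u Du) (dC u Du)).1.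
- by move=> a b u; exact: pQ_skew.
have E : forall u, domain5 B u ->
   (fun c a b => partial (Qb Af Cf s t r a b) c u) = dQb Af Cf s u.
  move=> u Du; apply/funext => c; apply/funext => a; apply/funext => b.
  exact: (partial_Qb s t r a b c (dA u Du) (dC u Du)).2.
split.
- move=> H u Du; have := H u Du o0 o3 o4.
  by rewrite (E u Du) /dQb Sch_alg034.
- move=> H u Du i j k; rewrite (E u Du) /dQb.
  have [c ->] := Sch_alg (Af (proj3 u)) (Cf (proj3 u)) (partial Af i3x (proj3 u)) (partial Af i3y (proj3 u))
     (partial Af i3z (proj3 u)) (partial Cf i3x (proj3 u)) (partial Cf i3y (proj3 u))
     (partial Cf i3z (proj3 u)) s t r i j k.
  by rewrite H // mulr0.
Qed.
End Spec2.



Section Main.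
Variable R : realType.

Lemma P0_eq (w : 'rV[R]_3 -> R) :
  P0_hirota w = Qb (fun X => partial w i3z X / partial w i3x X)
                   (fun X => partial w i3y X / partial w i3x X) 1 1 1.
Proof.
apply/funext => i; apply/funext => j; apply/funext => u.
rewrite /P0_hirota /Qb /pQ /=.
move: (partial w i3x (proj3 u)) (partial w i3y (proj3 u)) (partial w i3z (proj3 u)) => p q r.
case: i => [[|[|[|[|[|i]]]]] Hi]; case: j => [[|[|[|[|[|j]]]]] Hj] /=; ring.
Qed.

Lemma P1_eq (w : 'rV[R]_3 -> R) (a b : R) :
  P1_hirota a b = Qb (fun X => partial w i3z X / partial w i3x X)
                   (fun X => partial w i3y X / partial w i3x X) 0 b a.
Proof.
apply/funext => i; apply/funext => j; apply/funext => u.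
rewrite /P1_hirota /Qb /pQ /=.
move: (partial w i3x (proj3 u)) (partial w i3y (proj3 u)) (partial w i3z (proj3 u)) => p q r.
case: i => [[|[|[|[|[|i]]]]] Hi]; case: j => [[|[|[|[|[|j]]]]] Hj] /=; ring.
Qed.

Lemma pencil_eq (w : 'rV[R]_3 -> R) (a b lam : R) :
  pencil (P0_hirota w) (P1_hirota a b) lam =
  Qb (fun X => partial w i3z X / partial w i3x X)
     (fun X => partial w i3y X / partial w i3x X) 1 (1 + lam * b) (1 + lam * a).
Proof.
apply/funext => i; apply/funext => j; apply/funext => u.
rewrite /pencil /P0_hirota /P1_hirota /Qb /pQ /=.
move: (partial w i3x (proj3 u)) (partial w i3y (proj3 u)) (partial w i3z (proj3 u)) => p q r.
case: i => [[|[|[|[|[|i]]]]] Hi]; case: j => [[|[|[|[|[|j]]]]] Hj] /=; ring.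
Qed.


Lemma partial_quot (F G : 'rV[R]_3 -> R) X v :
  derivable F X v -> derivable G X v -> G X != 0 ->
  derivable (fun Y => F Y / G Y) X v /\
  'D_v (fun Y => F Y / G Y) X = 'D_v F X / G X - F X * 'D_v G X / (G X) ^+ 2.
Proof.
move=> dF dG G0.
have -> : (fun Y => F Y / G Y) = F * (fun Y => (G Y)^-1) by [].
have dV := derivableV G0 dG.
split; first exact: (derivableM dF dV).
rewrite (deriveM dF dV) (deriveV G0 dG).
have sE : forall a b : R, a *: b = a * b by [].
rewrite !sE.
move: ('D_v F X) ('D_v G X) (F X) (G X) G0 => p q f g g0.
by field.
Qed.

Definition ext3 (X : 'rV[R]_3) : 'rV[R]_5 :=
  \row_(i < 5) if (i < 3)%N then X 0 (inord i) else 0.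

Lemma proj3_ext3 X : proj3 (ext3 X) = X.
Proof.
apply/rowP => j; rewrite !mxE /=.
have -> : (j < 3)%N by [].
by rewrite inord_val.
Qed.


Lemma Jv_alg (t r wx wy wz Wzy Wyz Wyx Wxy Wxz Wzx Wxx : R) :
  wx != 0 -> Wzy = Wyz -> Wyx = Wxy -> Wxz = Wzx ->
  Jv (wz / wx) (wy / wx)
     (Wzx / wx - wz * Wxx / wx ^+ 2) (Wzy / wx - wz * Wxy / wx ^+ 2)
     (Wyx / wx - wy * Wxx / wx ^+ 2) (Wyz / wx - wy * Wxz / wx ^+ 2) 1 t r
   * wx ^+ 2 =
   (t - r) * wx * Wyz + (r - 1) * wy * Wzx - (t - 1) * wz * Wxy.
Proof. move=> w0 -> -> ->; rewrite /Jv; by field. Qed.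

Lemma corollary4p2_main (a b : R) (B : set 'rV[R]_3)
  (w : 'rV[R]_3 -> R) :
  a != 0 -> b != 0 -> a != b ->
  open B -> C2_on B w ->
  (forall X, B X -> partial w i3x X != 0) ->
  compatible_Poisson_pencil (domain5 B) (P0_hirota w) (P1_hirota a b) <->
  (forall X, B X ->
     (b - a) * partial w i3x X * partial (partial w i3y) i3z X
     + a * partial w i3y X * partial (partial w i3z) i3x X
     - b * partial w i3z X * partial (partial w i3x) i3y X = 0).
Proof.
move=> _ _ _ oB Cw wx0.
have qA : forall X, B X -> forall c',
   derivable (fun Y => partial w i3z Y / partial w i3x Y) X (ebasis R c') /\
   partial (fun Y => partial w i3z Y / partial w i3x Y) c' X =
   partial (partial w i3z) c' X / partial w i3x X
   - partial w i3z X * partial (partial w i3x) c' X / (partial w i3x X) ^+ 2.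
  move=> X BX c'; exact: (partial_quot ((Cw X BX).2.1 i3z c') ((Cw X BX).2.1 i3x c') (wx0 X BX)).
have qC : forall X, B X -> forall c',
   derivable (fun Y => partial w i3y Y / partial w i3x Y) X (ebasis R c') /\
   partial (fun Y => partial w i3y Y / partial w i3x Y) c' X =
   partial (partial w i3y) c' X / partial w i3x X
   - partial w i3y X * partial (partial w i3x) c' X / (partial w i3x X) ^+ 2.
  move=> X BX c'; exact: (partial_quot ((Cw X BX).2.1 i3y c') ((Cw X BX).2.1 i3x c') (wx0 X BX)).
have dAC : forall X, B X -> forall c',
   derivable (fun Y => partial w i3z Y / partial w i3x Y) X (ebasis R c') /\
   derivable (fun Y => partial w i3y Y / partial w i3x Y) X (ebasis R c').
  by move=> X BX c'; split; [exact: (qA X BX c').1 | exact: (qC X BX c').1].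
have JvE : forall X, B X -> forall t r,
  Jv (partial w i3z X / partial w i3x X) (partial w i3y X / partial w i3x X)
     (partial (fun Y => partial w i3z Y / partial w i3x Y) i3x X)
     (partial (fun Y => partial w i3z Y / partial w i3x Y) i3y X)
     (partial (fun Y => partial w i3y Y / partial w i3x Y) i3x X)
     (partial (fun Y => partial w i3y Y / partial w i3x Y) i3z X) 1 t r
   * (partial w i3x X) ^+ 2 =
   (t - r) * partial w i3x X * partial (partial w i3y) i3z X
   + (r - 1) * partial w i3y X * partial (partial w i3z) i3x X
   - (t - 1) * partial w i3z X * partial (partial w i3x) i3y X.
  move=> X BX t r.
  rewrite (qA X BX i3x).2 (qA X BX i3y).2 (qC X BX i3x).2 (qC X BX i3z).2.
  apply: Jv_alg.
  - exact: wx0 X BX.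
  - exact: (schwarz i3z i3y oB BX Cw).
  - exact: (schwarz i3y i3x oB BX Cw).
  - exact: (schwarz i3x i3z oB BX Cw).
have QP := fun s t r => Qb_poisson s t r oB dAC.
have Jv0 : forall X, B X -> forall t r,
   (t - r) * partial w i3x X * partial (partial w i3y) i3z X
   + (r - 1) * partial w i3y X * partial (partial w i3z) i3x X
   - (t - 1) * partial w i3z X * partial (partial w i3x) i3y X = 0 ->
  Jv (partial w i3z X / partial w i3x X) (partial w i3y X / partial w i3x X)
     (partial (fun Y => partial w i3z Y / partial w i3x Y) i3x X)
     (partial (fun Y => partial w i3z Y / partial w i3x Y) i3y X)
     (partial (fun Y => partial w i3y Y / partial w i3x Y) i3x X)
     (partial (fun Y => partial w i3y Y / partial w i3x Y) i3z X) 1 t r = 0.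
  move=> X BX t r H; have := JvE X BX t r; rewrite H => /eqP.
  rewrite mulf_eq0 expf_eq0 /= (negbTE (wx0 X BX)) orbF.
  by move/eqP.
split.
- case=> _ [_ Hpen] X BX.
  have := (QP 1 (1 + 1 * b) (1 + 1 * a)).1; rewrite -pencil_eq => /(_ (Hpen 1)) H.
  have Du : domain5 B (ext3 X) by rewrite /domain5 /= proj3_ext3.
  have := H _ Du; rewrite proj3_ext3 => J1.
  have := JvE X BX (1 + 1 * b) (1 + 1 * a); rewrite J1 mul0r.
  move: (partial w i3x X) (partial w i3y X) (partial w i3z X)
    (partial (partial w i3y) i3z X) (partial (partial w i3z) i3x X)
    (partial (partial w i3x) i3y X) => p q r' x y z E.
  apply/eqP; rewrite -subr_eq0; apply/eqP.
  rewrite [LHS](_ : _ = (1 + 1 * b - (1 + 1 * a)) * p * x + (1 + 1 * a - 1) * q * y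
     - (1 + 1 * b - 1) * r' * z); first by rewrite -E.
  ring.
- move=> Hir; split; [|split].
  + rewrite P0_eq; apply/(QP 1 1 1).2 => u Du; apply: Jv0 => //.
    by rewrite !subrr !mul0r addr0 subrr.
  + rewrite (P1_eq w); apply/(QP 0 b a).2 => u Du.
    by rewrite /Jv mul0r.
  + move=> lam; rewrite pencil_eq; apply/(QP _ _ _).2 => u Du; apply: Jv0 => //.
    have := Hir _ Du.
    move: (partial w i3x (proj3 u)) (partial w i3y (proj3 u)) (partial w i3z (proj3 u))
      (partial (partial w i3y) i3z (proj3 u)) (partial (partial w i3z) i3x (proj3 u))
      (partial (partial w i3x) i3y (proj3 u)) => p q r' x y z E.
    rewrite [LHS](_ : _ = lam * ((b - a) * p * x + a * q * y - b * r' * z)); first by rewrite E mulr0.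
    ring.
Qed.
End Main.


Unset Implicit Arguments.
Theorem corollary4p2 (R : realType) (a b : R) (B : set 'rV[R]_3)
  (w : 'rV[R]_3 -> R) :
  a != 0 -> b != 0 -> a != b ->
  open B -> C2_on B w ->
  (forall X, B X -> partial w i3x X != 0) ->
  compatible_Poisson_pencil (domain5 B) (P0_hirota w) (P1_hirota a b) <->
  (forall X, B X ->
     (b - a) * partial w i3x X * partial (partial w i3y) i3z X
     + a * partial w i3y X * partial (partial w i3z) i3x X
     - b * partial w i3z X * partial (partial w i3x) i3y X = 0).
Proof. exact: corollary4p2_main. Qed.
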